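(* Let $P_{Y|X}$ be a channel on finite alphabets and $\psi:\mathbb R_+\to\mathbb R_+$ a convex function with $F_I(t,P_{Y|X})\le t-\psi(t)$ for all $t\ge0$. For a finite-valued $W$ and encoder functions $f_j$, let $P_{Y^n|W}(y^n|w)=\prod_{j=1}^nP_{Y|X}(y_j|f_j(w,y^{j-1}))$. Then for all $t\ge0$, $$F_I(t,P_{Y^n|W})\le t-\psi^{(n)}(t),$$ where $\psi^{(1)}=\psi$ and $\psi^{(k+1)}=\psi^{(k)}\circ\psi$.
   Context: For a channel $P_{B|A}$, $F_I(t,P_{B|A})=\sup\{I(U;B): I(U;A)\le t,\ P_{UAB}=P_{UA}P_{B|A}\}$. *)

(* Defs.v *)
From mathcomp Require Import all_boot.
From Stdlib Require Import Reals.
Set Implicit Arguments. Unset Strict Implicit. Unset Printing Implicit Defensive.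

Open Scope R_scope.

Definition rsum (T : finType) (f : T -> R) : R := \big[Rplus/R0]_(x : T) f x.

Definition is_pmf (T : finType) (p : T -> R) : Prop :=
  (forall x, 0 <= p x) /\ rsum p = 1.

Definition is_channel (A B : finType) (K : A -> B -> R) : Prop :=
  forall a, is_pmf (K a).

Definition marg1 (X Y : finType) (q : X -> Y -> R) (x : X) : R := rsum (q x).
Definition marg2 (X Y : finType) (q : X -> Y -> R) (y : Y) : R :=
  rsum (fun x => q x y).
Definition mutinfo (X Y : finType) (q : X -> Y -> R) : R :=
  rsum (fun x => rsum (fun y =>
    if Rlt_dec 0 (q x y)
    then q x y * ln (q x y / (marg1 q x * marg2 q y))
    else 0)).

(* Joint law of (U,B) when P_{UAB} = P_{UA} P_{B|A}. *)
Definition through (U A B : finType) (pUA : U -> A -> R) (K : A -> B -> R)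
  (u : U) (b : B) : R := rsum (fun a => pUA u a * K a b).

Definition FI_set (A B : finType) (K : A -> B -> R) (t : R) (v : R) : Prop :=
  exists (U : finType) (pUA : U -> A -> R),
    is_pmf (fun ua : U * A => pUA ua.1 ua.2) /\
    mutinfo pUA <= t /\ v = mutinfo (through pUA K).

(* F_I(t, K) <= c, i.e. sup FI_set K t <= c (c is an upper bound). *)
Definition FI_le (A B : finType) (K : A -> B -> R) (t c : R) : Prop :=
  forall v, FI_set K t v -> v <= c.

Definition convex_on_nonneg (psi : R -> R) : Prop :=
  forall x y l, 0 <= x -> 0 <= y -> 0 <= l <= 1 ->
    psi (l * x + (1 - l) * y) <= l * psi x + (1 - l) * psi y.

(* The channel P_{Y^n|W} induced by encoders f_j(w, y^{j-1}):
   P(y^n | w) = prod_j P_{Y|X}(y_j | f_j(w, y^{j-1})).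
   Here y^{j-1} is the prefix [take j y] (indices 0-based). *)
Definition feedback_channel (X Y W : finType) (n : nat) (K : X -> Y -> R)
  (f : 'I_n -> W -> seq Y -> X) (w : W) (y : n.-tuple Y) : R :=
  \big[Rmult/R1]_(j < n) K (f j w (take j y)) (tnth y j).

(* Main.v *)
From HB Require Import structures.
Require Import Defs.
From mathcomp Require Import all_boot.
From Stdlib Require Import Reals Lra FunctionalExtensionality.
Set Implicit Arguments. Unset Strict Implicit. Unset Printing Implicit Defensive.
Open Scope R_scope.

Lemma Rplus_assoc' : associative Rplus. Proof. move=> x y z; ring. Qed.
Lemma Rmult_assoc' : associative Rmult. Proof. move=> x y z; ring. Qed.
HB.instance Definition _ := Monoid.isComLaw.Build R R0 Rplus Rplus_assoc' Rplus_comm Rplus_0_l.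
HB.instance Definition _ := Monoid.isComLaw.Build R R1 Rmult Rmult_assoc' Rmult_comm Rmult_1_l.
HB.instance Definition _ := Monoid.isMulLaw.Build R R0 Rmult Rmult_0_l Rmult_0_r.
HB.instance Definition _ := Monoid.isAddLaw.Build R Rmult Rplus Rmult_plus_distr_r Rmult_plus_distr_l.

Section Sums.
Variable I : Type.

Lemma bsum_ge0 (r : seq I) (P : pred I) (F : I -> R) :
  (forall i, P i -> 0 <= F i) -> 0 <= \big[Rplus/R0]_(i <- r | P i) F i.
Proof. move=> H; apply: (big_ind (fun x => 0 <= x)) => //; [lra|move=> *; lra]. Qed.

Lemma bsum_le (r : seq I) (P : pred I) (F G : I -> R) :
  (forall i, P i -> F i <= G i) ->
  \big[Rplus/R0]_(i <- r | P i) F i <= \big[Rplus/R0]_(i <- r | P i) G i.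
Proof. move=> H; apply: (big_ind2 (fun x y => x <= y)) => //; [lra|move=> *; lra]. Qed.

Lemma bsum_mulr (r : seq I) (P : pred I) (F : I -> R) a :
  \big[Rplus/R0]_(i <- r | P i) F i * a = \big[Rplus/R0]_(i <- r | P i) (F i * a).
Proof. exact: big_distrl. Qed.

Lemma bsum_mull (r : seq I) (P : pred I) (F : I -> R) a :
  a * \big[Rplus/R0]_(i <- r | P i) F i = \big[Rplus/R0]_(i <- r | P i) (a * F i).
Proof. exact: big_distrr. Qed.

Lemma bsum_plus (r : seq I) (P : pred I) (F G : I -> R) :
  \big[Rplus/R0]_(i <- r | P i) (F i + G i) =
  \big[Rplus/R0]_(i <- r | P i) F i + \big[Rplus/R0]_(i <- r | P i) G i.
Proof. exact: big_split. Qed.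
End Sums.

Lemma bterm_le_sum (I : finType) (P : pred I) (F : I -> R) j :
  (forall i, P i -> 0 <= F i) -> P j -> F j <= \big[Rplus/R0]_(i | P i) F i.
Proof.
move=> H Pj; rewrite (bigD1 j) //=.
have := @bsum_ge0 I (index_enum I) (fun i => P i && (i != j)) F.
have : forall i, P i && (i != j) -> 0 <= F i by move=> i /andP[]; auto.
move=> h1 h2; have := h2 h1; lra.
Qed.

Lemma bsum_eq0 (I : finType) (P : pred I) (F : I -> R) j :
  (forall i, P i -> 0 <= F i) -> P j -> \big[Rplus/R0]_(i | P i) F i = 0 -> F j = 0.
Proof.
move=> H Pj S; have := bterm_le_sum H Pj; have := H j Pj; lra.
Qed.

Definition phi (x y : R) : R := if Rlt_dec 0 x then x * ln (x / y) else 0.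

Lemma ln_le_sub1 y : 0 < y -> ln y <= y - 1.
Proof. move=> Hy; have := exp_ineq1_le (ln y); rewrite exp_ln //; lra. Qed.

Lemma phi_ge a b k : 0 <= a -> 0 <= b -> (0 < a -> 0 < b) -> 0 < k ->
  a * (ln k + 1) + b * (- k) <= phi a b.
Proof.
move=> Ha Hb Hab Hk; rewrite /phi; case: Rlt_dec => Ha' /=.
- have Hb' := Hab Ha'.
  have Hy : 0 < b * k / a by apply: Rdiv_lt_0_compat => //; nra.
  have E : a / b = k * / (b * k / a) by field; lra.
  rewrite E ln_mult ?ln_Rinv //; last by apply: Rinv_0_lt_compat.
  have h := ln_le_sub1 Hy.
  have E2 : a * (b * k / a) = b * k by field; lra.
  have := Rmult_le_compat_l a _ _ (Rlt_le _ _ Ha') h.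
  set y := b * k / a in E2 *.
  rewrite Rmult_minus_distr_l E2. rewrite Rmult_plus_distr_l. move=> HH; lra.
- have -> : a = 0 by lra. nra.
Qed.

Lemma phi_0 y : phi 0 y = 0.
Proof. by rewrite /phi; case: Rlt_dec => // h; lra. Qed.

Lemma phi_pos x y : 0 < x -> phi x y = x * ln (x / y).
Proof. by move=> h; rewrite /phi; case: Rlt_dec => // h'; lra. Qed.

Lemma phi_nonpos x y : x <= 0 -> phi x y = 0.
Proof. by move=> h; rewrite /phi; case: Rlt_dec => // h'; lra. Qed.

Lemma LSI (I : finType) (P : pred I) (a b : I -> R) :
  (forall i, P i -> 0 <= a i) -> (forall i, P i -> 0 <= b i) ->
  (forall i, P i -> 0 < a i -> 0 < b i) ->
  phi (\big[Rplus/R0]_(i | P i) a i) (\big[Rplus/R0]_(i | P i) b i)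
  <= \big[Rplus/R0]_(i | P i) phi (a i) (b i).
Proof.
move=> Ha Hb Hab.
set A := \big[Rplus/R0]_(i | P i) a i; set B := \big[Rplus/R0]_(i | P i) b i.
have A0 : 0 <= A by apply: bsum_ge0.
have B0 : 0 <= B by apply: bsum_ge0.
case: (Rle_lt_dec A 0) => HA.
- rewrite phi_nonpos //.
  rewrite big1; first exact: Rle_refl. move=> i Pi.
  have -> : a i = 0 by apply: (bsum_eq0 Ha Pi); rewrite -/A; lra.
  exact: phi_0.
- have HB : 0 < B.
    case: (Rle_lt_dec B 0) => // HB.
    have : A <= 0; last by lra.
    suff : A <= \big[Rplus/R0]_(i | P i) (0:R) by rewrite big1_eq.
    apply: bsum_le => i Pi.
    have bi0 : b i = 0 by apply: (bsum_eq0 Hb Pi); rewrite -/B; lra.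
    case: (Rle_lt_dec (a i) 0) => // h; have := Hab i Pi h; lra.
  have Hk : 0 < A / B by apply: Rdiv_lt_0_compat.
  apply: Rle_trans (bsum_le _ (fun i Pi => phi_ge (Ha i Pi) (Hb i Pi) (Hab i Pi) Hk)).
  rewrite bsum_plus -(@bsum_mulr _ _ _ a) -(@bsum_mulr _ _ _ b) -/A -/B.
  rewrite phi_pos //.
  have -> : B * - (A / B) = - A by field; lra.
  lra.
Qed.

Lemma bsum_eq0T (I : finType) (F : I -> R) j :
  (forall i, 0 <= F i) -> \big[Rplus/R0]_(i : I) F i = 0 -> F j = 0.
Proof. by move=> H S; apply: (bsum_eq0 (P := xpredT)) => //; move=> i _; apply: H. Qed.

Lemma bterm_le_sumT (I : finType) (F : I -> R) j :
  (forall i, 0 <= F i) -> F j <= \big[Rplus/R0]_(i : I) F i.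
Proof. by move=> H; apply: (bterm_le_sum (P := xpredT)) => // i _; apply: H. Qed.

Definition rowS (A B : finType) (s : A -> B -> R) a := \big[Rplus/R0]_(b : B) s a b.
Definition colS (A B : finType) (s : A -> B -> R) b := \big[Rplus/R0]_(a : A) s a b.
Definition totS (A B : finType) (s : A -> B -> R) := \big[Rplus/R0]_(a : A) \big[Rplus/R0]_(b : B) s a b.

Definition J (A B : finType) (s : A -> B -> R) : R :=
  \big[Rplus/R0]_(a : A) \big[Rplus/R0]_(b : B)
     phi (s a b) (rowS s a * colS s b / totS s).

Section JLemmas.
Variables A B : finType.
Implicit Type s : A -> B -> R.

Lemma bsum_pair (F : A * B -> R) :
  \big[Rplus/R0]_(v : A * B) F v = \big[Rplus/R0]_(a : A) \big[Rplus/R0]_(b : B) F (a, b).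
Proof. by rewrite pair_bigA; apply: eq_bigr => -[]. Qed.

Lemma pos_info s a b : (forall a b, 0 <= s a b) -> 0 < s a b ->
  0 < rowS s a /\ 0 < colS s b /\ 0 < totS s /\ s a b <= rowS s a /\ s a b <= colS s b.
Proof.
move=> H0 Hp.
have r1 : s a b <= rowS s a by apply: bterm_le_sum => // *; apply: H0.
have c1 : s a b <= colS s b by apply: bterm_le_sum => // *; apply: H0.
have t1 : rowS s a <= totS s.
  by apply: (bterm_le_sum (F := fun a => rowS s a)) => // *; apply: bsum_ge0 => *; apply: H0.
lra.
Qed.

Lemma J_zero s : (forall a b, s a b = 0) -> J s = 0.
Proof. by move=> H; rewrite /J big1 // => a _; rewrite big1 // => b _; rewrite H phi_0. Qed.

Lemma bsum_prod (f : A -> R) (g : B -> R) k :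
  \big[Rplus/R0]_(a : A) \big[Rplus/R0]_(b : B) (f a * g b / k) =
  (\big[Rplus/R0]_(a : A) f a) * (\big[Rplus/R0]_(b : B) g b) / k.
Proof.
rewrite /Rdiv bsum_mulr bsum_mulr; apply: eq_bigr => a _.
by rewrite bsum_mull bsum_mulr.
Qed.

Lemma J_ge0 s : (forall a b, 0 <= s a b) -> 0 <= J s.
Proof.
move=> H0.
have Hr : forall a, 0 <= rowS s a by move=> a; apply: bsum_ge0 => *; apply: H0.
have Hc : forall b, 0 <= colS s b by move=> b; apply: bsum_ge0 => *; apply: H0.
have HT : 0 <= totS s by apply: bsum_ge0 => *; apply: Hr.
rewrite /J -(bsum_pair (fun v => phi (s v.1 v.2) (rowS s v.1 * colS s v.2 / totS s))).
apply: Rle_trans (LSI (P := predT) _ _ _); first last.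
- move=> [a b] _ /= hp; have [h1 [h2 [h3 _]]] := pos_info H0 hp.
  apply: Rdiv_lt_0_compat => //; nra.
- move=> [a b] _ /=; apply: Rmult_le_pos; first exact: Rmult_le_pos (Hr a) (Hc b).
  case: (Req_dec (totS s) 0) => [->|h]; first by rewrite Rinv_0; lra.
  left; apply: Rinv_0_lt_compat; lra.
- by move=> [a b] _ /=.
rewrite (bsum_pair (fun v => s v.1 v.2)) (bsum_pair (fun v => rowS s v.1 * colS s v.2 / totS s)) /=.
rewrite bsum_prod.
case: (Rle_lt_dec (totS s) 0) => h.
- rewrite phi_nonpos //.
  by apply: Rle_refl.
- rewrite phi_pos // -/(totS s).
  have -> : \big[Rplus/R0]_b colS s b = totS s by rewrite /colS /totS exchange_big.
  have -> : totS s * totS s / totS s = totS s by field; lra.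
  rewrite /Rdiv Rinv_r; last lra.
  by rewrite ln_1 Rmult_0_r; apply: Rle_refl.
Qed.

End JLemmas.

Lemma mutinfoE (A B : finType) (q : A -> B -> R) :
  mutinfo q = \big[Rplus/R0]_(a : A) \big[Rplus/R0]_(b : B)
     phi (q a b) (rsum (q a) * rsum (fun a' => q a' b)).
Proof. by []. Qed.

Lemma rsum_div (A : finType) (f : A -> R) T :
  rsum (fun a => f a / T) = rsum f / T.
Proof. by rewrite /rsum /Rdiv bsum_mulr. Qed.

Lemma bsum_divr (I : Type) (r : seq I) (P : pred I) (F : I -> R) a :
  \big[Rplus/R0]_(i <- r | P i) F i / a = \big[Rplus/R0]_(i <- r | P i) (F i / a).
Proof. exact: big_distrl. Qed.

Section JLemmas2.
Variables A B : finType.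
Implicit Type s : A -> B -> R.

Lemma mutinfo_scale s T : (forall a b, 0 <= s a b) -> totS s = T -> 0 < T ->
  mutinfo (fun a b => s a b / T) = J s / T.
Proof.
move=> H0 HT T0.
rewrite mutinfoE /J bsum_divr; apply: eq_bigr => a _; rewrite bsum_divr; apply: eq_bigr => b _.
rewrite (rsum_div (fun b => s a b)) (rsum_div (fun a => s a b)) -/(rowS s a) -/(colS s b) HT.
case: (Rle_lt_dec (s a b) 0) => h.
- have -> : s a b = 0 by have := H0 a b; lra.
  by rewrite /Rdiv Rmult_0_l !phi_0 Rmult_0_l.
- have [h1 [h2 [h3 _]]] := pos_info H0 h.
  rewrite !phi_pos //; last by apply: Rdiv_lt_0_compat.
  have -> : s a b / T / (rowS s a / T * (colS s b / T)) = s a b / (rowS s a * colS s b / T).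
    by field; repeat split; lra.
  by field; lra.
Qed.

Lemma J_push (C : finType) s (g : B -> C) : (forall a b, 0 <= s a b) ->
  J (fun a c => \big[Rplus/R0]_(b | g b == c) s a b) <= J s.
Proof.
move=> H0.
set r := fun a c => _.
have Hrow : forall a, rowS r a = rowS s a.
  move=> a; rewrite /rowS /r [RHS](partition_big g predT) //.
have Hcol : forall c, colS r c = \big[Rplus/R0]_(b | g b == c) colS s b.
  by move=> c; rewrite /colS /r exchange_big.
have Htot : totS r = totS s.
  by rewrite /totS; apply: eq_bigr => a _; have := Hrow a; rewrite /rowS.
rewrite /J Htot; apply: bsum_le => a _.
rewrite [X in _ <= X](partition_big g predT) //.
apply: bsum_le => c _.
rewrite Hrow Hcol /Rdiv bsum_mull bsum_mulr.
apply: LSI.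
- by move=> b _; apply: H0.
- move=> b _; apply: Rmult_le_pos; first apply: Rmult_le_pos.
  + by apply: bsum_ge0 => *; apply: H0.
  + by apply: bsum_ge0 => *; apply: H0.
  + case: (Req_dec (totS s) 0) => [->|h]; first by rewrite Rinv_0; lra.
    left; apply: Rinv_0_lt_compat; have : 0 <= totS s by apply: bsum_ge0 => *; apply: bsum_ge0 => *; apply: H0.
    lra.
- move=> b _ hp; have [h1 [h2 [h3 _]]] := pos_info H0 hp.
  apply: Rmult_lt_0_compat; [nra | exact: Rinv_0_lt_compat].
Qed.
End JLemmas2.

Lemma chainG (U Z Y : finType) (Q : U -> Z -> Y -> R) (q : U -> Z -> R) :
  (forall u z y, 0 <= Q u z y) -> (forall u z, \big[Rplus/R0]_(y : Y) Q u z y = q u z) ->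
  \big[Rplus/R0]_(u : U) \big[Rplus/R0]_(z : Z) \big[Rplus/R0]_(y : Y)
     phi (Q u z y) ((\big[Rplus/R0]_(z' : Z) \big[Rplus/R0]_(y' : Y) Q u z' y') *
                    (\big[Rplus/R0]_(u' : U) Q u' z y))
  = mutinfo q + \big[Rplus/R0]_(z : Z) J (fun u y => Q u z y).
Proof.
move=> H0 Hq.
rewrite mutinfoE /J [X in _ = _ + X]exchange_big -bsum_plus; apply: eq_bigr => u _.
rewrite -bsum_plus; apply: eq_bigr => z _.
have EU : \big[Rplus/R0]_(z' : Z) \big[Rplus/R0]_(y' : Y) Q u z' y' = rsum (q u).
  by rewrite /rsum; apply: eq_bigr => z' _; apply: Hq.
have ET : totS (fun u y => Q u z y) = rsum (fun u' => q u' z).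
  by rewrite /rsum /totS; apply: eq_bigr => u' _; apply: Hq.
have ER : rowS (fun u y => Q u z y) u = q u z by apply: Hq.
rewrite EU ET ER.
have Hq0 : forall u1 z1, 0 <= q u1 z1.
  move=> u1 z1; rewrite -Hq; apply: bsum_ge0 => i _; apply: H0.
have HC : forall y, Q u z y <= colS (fun u y => Q u z y) y.
  by move=> y; apply: (bterm_le_sum (F := fun u' => Q u' z y)) => // *; apply: H0.
rewrite /colS in HC |- *.
case: (Rle_lt_dec (q u z) 0) => ha.
- have E0 : forall y, Q u z y = 0.
    move=> y; apply: (bsum_eq0T (F := Q u z)); first by move=> i; apply: H0.
    rewrite Hq; have := Hq0 u z; lra.
  rewrite phi_nonpos // Rplus_0_l; apply: eq_bigr => y _; by rewrite E0 !phi_0.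
- have hU : q u z <= rsum (q u) by apply: (bterm_le_sum (F := q u)) => // *.
  have hZ : q u z <= rsum (fun u' => q u' z) by apply: (bterm_le_sum (F := fun u' => q u' z)) => // *.
  rewrite (phi_pos _ ha) -{1}Hq bsum_mulr -bsum_plus; apply: eq_bigr => y _.
  case: (Rle_lt_dec (Q u z y) 0) => hQ.
  + have -> : Q u z y = 0 by have := H0 u z y; lra.
    by rewrite !phi_0; ring.
  + have hc := HC y.
    rewrite !phi_pos //.
    set a := q u z in ha hU hZ *; set QU := rsum (q u) in hU *;
    set QZ := rsum (fun u' => q u' z) in hZ *;
    set C := \big[Rplus/R0]_(u' : U) Q u' z y in hc *; set x := Q u z y in hQ hc *.
    have -> : x / (QU * C) = (a / (QU * QZ)) * (x / (a * C / QZ)) by field; repeat split; lra.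
    rewrite ln_mult; first ring.
    * apply: Rdiv_lt_0_compat; nra.
    * apply: Rdiv_lt_0_compat => //; apply: Rdiv_lt_0_compat; nra.
Qed.

Lemma markov (U W Z : finType) (p : U -> W -> R) (c : W -> Z -> R) :
  (forall u w, 0 <= p u w) -> (forall w z, 0 <= c w z) ->
  (forall w, \big[Rplus/R0]_(z : Z) c w z = 1) ->
  mutinfo p = mutinfo (through p c) + \big[Rplus/R0]_(z : Z) J (fun u w => p u w * c w z).
Proof.
move=> Hp Hc Hc1.
rewrite -(@chainG U Z W (fun u z w => p u w * c w z) (through p c)); first last.
- by [].
- by move=> *; apply: Rmult_le_pos.
rewrite mutinfoE; apply: eq_bigr => u _; rewrite exchange_big; apply: eq_bigr => w _.
have EU : \big[Rplus/R0]_(z1 : Z) \big[Rplus/R0]_(w1 : W) (p u w1 * c w1 z1) = rsum (p u).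
  rewrite exchange_big /rsum; apply: eq_bigr => w1 _.
  by rewrite -bsum_mull Hc1 Rmult_1_r.
rewrite EU.
have Hpos : forall a, 0 <= a -> a <= 0 -> a = 0 by move=> *; lra.
case: (Rle_lt_dec (p u w) 0) => hp.
- have -> : p u w = 0 by apply: Hpos.
  rewrite phi_0 big1 // => z _; by rewrite Rmult_0_l phi_0.
- have hU : p u w <= rsum (p u) by apply: bterm_le_sumT.
  have hW : p u w <= rsum (fun u' => p u' w) by apply: (bterm_le_sumT (F := fun u' => p u' w)).
  rewrite (phi_pos _ hp) -[X in X = _]Rmult_1_l -(Hc1 w) bsum_mulr.
  apply: eq_bigr => z _.
  rewrite -bsum_mulr -/(rsum (fun u' => p u' w)).
  case: (Rle_lt_dec (c w z) 0) => hc.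
  + have -> : c w z = 0 by apply: Hpos.
    by rewrite Rmult_0_r phi_0; ring.
  + rewrite phi_pos; last by apply: Rmult_lt_0_compat.
    have -> : p u w * c w z / (rsum (p u) * (rsum (fun u' => p u' w) * c w z)) =
              p u w / (rsum (p u) * rsum (fun u' => p u' w)) by field; repeat split; lra.
    ring.
Qed.

Section Jensen.
Variable psi : R -> R.
Hypothesis psi0 : forall t, 0 <= t -> 0 <= psi t.
Hypothesis Hconv : convex_on_nonneg psi.

Lemma jensen_seq (I : Type) (r : seq I) (w x : I -> R) :
  (forall i, 0 <= w i) -> (forall i, 0 <= x i) ->
  let S := \big[Rplus/R0]_(i <- r) w i in
  let M := \big[Rplus/R0]_(i <- r) (w i * x i) in
  0 <= S /\ 0 <= M /\ (S = 0 -> M = 0) /\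
  S * psi (M / S) <= \big[Rplus/R0]_(i <- r) (w i * psi (x i)).
Proof.
move=> Hw Hx; elim: r => [|i r [S0 [M0 [SM IH]]]] /=.
  rewrite !big_nil; split; [lra|split; [lra|split; [by []|lra]]].
rewrite !big_cons.
set S' := \big[Rplus/R0]_(j <- r) w j in S0 SM IH *.
set M' := \big[Rplus/R0]_(j <- r) (w j * x j) in M0 SM IH *.
set R' := \big[Rplus/R0]_(j <- r) (w j * psi (x j)) in IH *.
have wi := Hw i; have xi := Hx i.
have px := psi0 xi.
have R0' : 0 <= R' by apply: (Rle_trans _ _ _ _ IH); case: (Req_dec S' 0) => [->|h]; [lra|];
  apply: Rmult_le_pos => //; apply: psi0; apply: Rmult_le_pos => //;
  left; apply: Rinv_0_lt_compat; lra.
split; first lra. split; first nra. split.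
  move=> h; have e1 : w i = 0 by lra.
  have e2 : S' = 0 by lra.
  rewrite e1 SM //; ring.
case: (Req_dec (w i + S') 0) => hS.
  rewrite hS Rmult_0_l; nra.
case: (Req_dec S' 0) => hS'.
  rewrite hS' SM // !Rplus_0_r.
  have -> : w i * x i / w i = x i by field; lra.
  lra.
set l := w i / (w i + S').
have hl : 0 <= l <= 1.
  rewrite /l; split.
  + apply: Rmult_le_pos => //; left; apply: Rinv_0_lt_compat; lra.
  + have e : 1 - w i / (w i + S') = S' / (w i + S') by field; lra.
    have : 0 <= S' / (w i + S') by apply: Rmult_le_pos => //; left; apply: Rinv_0_lt_compat; lra.
    lra.
have E : (w i * x i + M') / (w i + S') = l * x i + (1 - l) * (M' / S').
  by rewrite /l; field; lra.
have hM : 0 <= M' / S' by apply: Rmult_le_pos => //; left; apply: Rinv_0_lt_compat; lra.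
have := Hconv xi hM hl; rewrite -E => hc.
have E2 : (w i + S') * (l * psi (x i) + (1 - l) * psi (M' / S')) = w i * psi (x i) + S' * psi (M' / S').
  by rewrite /l; field; lra.
have : (w i + S') * psi ((w i * x i + M') / (w i + S')) <=
       (w i + S') * (l * psi (x i) + (1 - l) * psi (M' / S')).
  by apply: Rmult_le_compat_l => //; lra.
rewrite E2; lra.
Qed.

Lemma jensen (I : finType) (w x : I -> R) :
  (forall i, 0 <= w i) -> (forall i, 0 <= x i) -> \big[Rplus/R0]_(i : I) w i = 1 ->
  psi (\big[Rplus/R0]_(i : I) (w i * x i)) <= \big[Rplus/R0]_(i : I) (w i * psi (x i)).
Proof.
move=> Hw Hx S1; have [_ [_ [_ H]]] := jensen_seq (index_enum I) Hw Hx.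
move: H; rewrite S1 Rmult_1_l /Rdiv Rinv_1 Rmult_1_r; by [].
Qed.
End Jensen.

Lemma Rinv_ge0 x : 0 <= x -> 0 <= / x.
Proof. case: (Req_dec x 0) => [->|h] hx; first by rewrite Rinv_0; lra.
left; apply: Rinv_0_lt_compat; lra. Qed.

Lemma partition_sum (A B : finType) (h : A -> B) (F : A -> R) :
  \big[Rplus/R0]_(a : A) F a = \big[Rplus/R0]_(b : B) \big[Rplus/R0]_(a | h a == b) F a.
Proof. by rewrite (partition_big h predT). Qed.

Section GS.
Variables U W Z X Y : finType.
Variable K : X -> Y -> R.
Variable psi : R -> R.
Hypothesis HK : is_channel K.
Hypothesis psi0 : forall t, 0 <= t -> 0 <= psi t.
Hypothesis Hconv : convex_on_nonneg psi.
Hypothesis HF : forall t, 0 <= t -> FI_le K t (t - psi t).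
Variable p : U -> W -> R.
Variable c : W -> Z -> R.
Variable g : W -> Z -> X.
Variable t : R.
Hypothesis Hp0 : forall u w, 0 <= p u w.
Hypothesis Hp1 : \big[Rplus/R0]_(u : U) \big[Rplus/R0]_(w : W) p u w = 1.
Hypothesis Hc0 : forall w z, 0 <= c w z.
Hypothesis Hc1 : forall w, \big[Rplus/R0]_(z : Z) c w z = 1.
Hypothesis Ht : mutinfo p <= t.

Definition cc' (w : W) (v : Z * Y) := c w v.1 * K (g w v.1) v.2.
Definition ss (z : Z) (u : U) (w : W) := p u w * c w z.
Definition mm (z : Z) (u : U) (y : Y) := \big[Rplus/R0]_(w : W) (p u w * (c w z * K (g w z) y)).
Definition TT (z : Z) := totS (ss z).

Lemma HK0 x y : 0 <= K x y. Proof. by have [h _] := HK x; apply: h. Qed.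
Lemma HK1 x : \big[Rplus/R0]_(y : Y) K x y = 1. Proof. by have [_ h] := HK x. Qed.

Lemma ss0 z u w : 0 <= ss z u w. Proof. by apply: Rmult_le_pos. Qed.
Lemma mm0 z u y : 0 <= mm z u y.
Proof. apply: bsum_ge0 => w _; apply: Rmult_le_pos => //; apply: Rmult_le_pos => //; exact: HK0. Qed.

Lemma mm_sumy z u : \big[Rplus/R0]_(y : Y) mm z u y = through p c u z.
Proof.
rewrite /mm exchange_big /through /rsum; apply: eq_bigr => w _.
by rewrite -bsum_mull -bsum_mull HK1 Rmult_1_r.
Qed.

Lemma chain_step : mutinfo (through p cc') = mutinfo (through p c) + \big[Rplus/R0]_(z : Z) J (mm z).
Proof.
rewrite -(@chainG U Z Y (fun u z y => mm z u y) (through p c)); last first.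
- by move=> u z; apply: mm_sumy.
- by move=> *; apply: mm0.
rewrite mutinfoE; apply: eq_bigr => u _.
rewrite bsum_pair; apply: eq_bigr => z _; apply: eq_bigr => y _.
by rewrite /rsum bsum_pair.
Qed.

Lemma markov_step : mutinfo p = mutinfo (through p c) + \big[Rplus/R0]_(z : Z) J (ss z).
Proof. exact: markov. Qed.

Lemma TT0 z : 0 <= TT z.
Proof. by apply: bsum_ge0 => u _; apply: bsum_ge0 => w _; apply: ss0. Qed.

Lemma TT1 : \big[Rplus/R0]_(z : Z) TT z = 1.
Proof.
rewrite /TT /totS /ss exchange_big -Hp1; apply: eq_bigr => u _.
rewrite exchange_big; apply: eq_bigr => w _.
by rewrite -bsum_mull Hc1 Rmult_1_r.
Qed.

Lemma TT_zero z : TT z <= 0 -> forall u w, ss z u w = 0.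
Proof.
move=> h u w.
have hT : TT z = 0 by have := TT0 z; lra.
have hu : rowS (ss z) u = 0.
  apply: (bsum_eq0T (F := fun u => rowS (ss z) u)) => //.
  by move=> i; apply: bsum_ge0 => *; apply: ss0.
by apply: (bsum_eq0T (F := ss z u)) => // i; apply: ss0.
Qed.

Lemma perz z x : 0 <= x -> J (ss z) / TT z <= x -> J (mm z) <= TT z * x - TT z * psi x.
Proof.
move=> x0 hx.
case: (Rle_lt_dec (TT z) 0) => hT.
  have hT0 : TT z = 0 by have := TT0 z; lra.
  rewrite hT0 J_zero; first lra.
  move=> u y; rewrite /mm big1 // => w _.
  by rewrite -Rmult_assoc; have := TT_zero hT u w; rewrite /ss => ->; ring.
set r := fun u x => \big[Rplus/R0]_(w | g w z == x) ss z u w.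
have r0 : forall u x, 0 <= r u x by move=> *; apply: bsum_ge0 => *; apply: ss0.
have totr : totS r = TT z.
  rewrite /totS /TT /totS; apply: eq_bigr => u _.
  by rewrite (partition_sum (fun w => g w z)).
have pmf : is_pmf (fun ua : U * X => r ua.1 ua.2 / TT z).
  split.
  - by move=> [u x'] /=; apply: Rmult_le_pos => //; left; apply: Rinv_0_lt_compat.
  - rewrite /rsum bsum_pair /=.
    under eq_bigr => u _ do rewrite -bsum_divr.
    rewrite -bsum_divr -/(totS r) totr /Rdiv Rinv_r //; lra.
have mir : mutinfo (fun u x => r u x / TT z) <= x.
  rewrite mutinfo_scale //.
  apply: Rle_trans hx; rewrite /Rdiv; apply: Rmult_le_compat_r; first by left; apply: Rinv_0_lt_compat.
  exact: (J_push (fun w => g w z) (@ss0 z)).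
have thr : through (fun u x => r u x / TT z) K = fun u y => mm z u y / TT z.
  apply: functional_extensionality => u; apply: functional_extensionality => y.
  rewrite /through /rsum.
  under eq_bigr => x' _ do rewrite /Rdiv Rmult_assoc (Rmult_comm (/ TT z)) -Rmult_assoc.
  rewrite -bsum_mulr; congr (_ * _).
  rewrite /mm (partition_sum (fun w => g w z)); apply: eq_bigr => x' _.
  rewrite /r bsum_mulr; apply: eq_bigr => w /eqP <-.
  by rewrite /ss Rmult_assoc.
have totm : totS (mm z) = TT z.
  rewrite /totS /TT /totS; apply: eq_bigr => u _.
  rewrite /mm exchange_big; apply: eq_bigr => w _.
  by rewrite -bsum_mull -bsum_mull HK1 Rmult_1_r /ss.
have H := HF x0 (v := mutinfo (through (fun u x => r u x / TT z) K)).
have : mutinfo (through (fun u x => r u x / TT z) K) <= x - psi x.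
  by apply: H; exists U, (fun u x => r u x / TT z).
rewrite thr mutinfo_scale //; last by move=> *; apply: mm0.
move=> h.
have := Rmult_le_compat_l (TT z) _ _ (Rlt_le _ _ hT) h.
have -> : TT z * (J (mm z) / TT z) = J (mm z) by field; lra.
lra.
Qed.

Lemma GS : mutinfo (through p cc') <= t - psi (t - mutinfo (through p c)).
Proof.
set a := mutinfo (through p c).
pose x z := J (ss z) / TT z + (t - mutinfo p).
have x0 : forall z, 0 <= x z.
  move=> z; rewrite /x; have := J_ge0 (@ss0 z); have := Rinv_ge0 (TT0 z); move=> h1 h2.
  have := Rmult_le_pos _ _ h2 h1; rewrite -/(Rdiv _ _); lra.
have Sx : \big[Rplus/R0]_(z : Z) (TT z * x z) = t - a.
  have mk := markov_step; rewrite -/a in mk.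
  transitivity (\big[Rplus/R0]_(z : Z) (J (ss z) + TT z * (t - mutinfo p))).
    apply: eq_bigr => z _; rewrite /x.
    case: (Rle_lt_dec (TT z) 0) => hT.
    + have hT0 : TT z = 0 by have := TT0 z; lra.
      rewrite hT0 J_zero; first ring.
      by move=> u w; apply: TT_zero; lra.
    + field; lra.
  rewrite bsum_plus -bsum_mulr TT1; lra.
have Jen := jensen psi0 Hconv TT0 x0 TT1.
rewrite Sx in Jen.
rewrite chain_step -/a.
have : \big[Rplus/R0]_(z : Z) J (mm z) <=
       \big[Rplus/R0]_(z : Z) (TT z * x z + (- (TT z * psi (x z)))).
  apply: bsum_le => z _.
  have hz : J (ss z) / TT z <= x z by rewrite /x; lra.
  have := perz (x0 z) hz; lra.
rewrite bsum_plus Sx.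
have -> : \big[Rplus/R0]_(z : Z) - (TT z * psi (x z)) = (-1) * \big[Rplus/R0]_(z : Z) (TT z * psi (x z)).
  by rewrite bsum_mull; apply: eq_bigr => *; ring.
lra.
Qed.
End GS.

Lemma mutinfo_prod (A B : finType) (al : A -> R) (be : B -> R) :
  (forall a, 0 <= al a) -> (forall b, 0 <= be b) ->
  rsum al = 1 -> rsum be = 1 -> mutinfo (fun a b => al a * be b) = 0.
Proof.
move=> H1 H2 S1 S2; rewrite mutinfoE big1 // => a _; rewrite big1 // => b _.
have -> : rsum (fun b => al a * be b) = al a by rewrite /rsum -bsum_mull -/(rsum be) S2 Rmult_1_r.
have -> : rsum (fun a' => al a' * be b) = be b by rewrite /rsum -bsum_mulr -/(rsum al) S1 Rmult_1_l.
case: (Rle_lt_dec (al a * be b) 0) => h; first by rewrite phi_nonpos.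
rewrite phi_pos // /Rdiv Rinv_r; [by rewrite ln_1 Rmult_0_r | lra].
Qed.

Lemma mutinfo_relabel (A B B' : finType) (e : B -> B') (q : A -> B -> R) (q' : A -> B' -> R) :
  bijective e -> (forall a b, q' a (e b) = q a b) -> mutinfo q' = mutinfo q.
Proof.
move=> be H; rewrite !mutinfoE; apply: eq_bigr => a _.
rewrite (reindex e) /=; last exact: onW_bij.
apply: eq_bigr => b _.
have -> : rsum (q' a) = rsum (q a).
  by rewrite /rsum (reindex e) /=; [apply: eq_bigr => *; apply: H | exact: onW_bij].
by rewrite H; congr (phi _ (_ * _)); apply: eq_bigr => *; apply: H.
Qed.

Lemma sum_unit (F : unit -> R) : \big[Rplus/R0]_(u : unit) F u = F tt.
Proof. by rewrite (big_pred1 tt) // => -[]. Qed.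

Lemma sum_tuple0 (Y : finType) (F : 0.-tuple Y -> R) : \big[Rplus/R0]_(z : 0.-tuple Y) F z = F [tuple].
Proof. rewrite (big_pred1 [tuple]) // => z /=; rewrite (tuple0 z); apply/esym/eqP; by []. Qed.

Section Psi.
Variables (X Y : finType) (K : X -> Y -> R) (psi : R -> R).
Hypothesis HK : is_channel K.
Hypothesis psi0 : forall t, 0 <= t -> 0 <= psi t.
Hypothesis Hconv : convex_on_nonneg psi.
Hypothesis HF : forall t, 0 <= t -> FI_le K t (t - psi t).

Lemma psi_at0 (x0 : X) : psi 0 = 0.
Proof.
pose d := fun x : X => if x == x0 then 1 else 0.
have d0 : forall x, 0 <= d x by move=> x; rewrite /d; case: eqP => _; lra.
have d1 : rsum d = 1.
  rewrite /rsum (bigD1 x0) //= big1 /d ?eqxx; first lra.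
  by move=> x /negbTE ->.
have [K0 K1] := HK x0.
have H := HF (Rle_refl 0) (v := 0).
have : 0 <= 0 - psi 0.
  apply: H; exists (unit : finType), (fun (u : unit) x => 1 * d x); split; [|split].
  - split; first by move=> [u x] /=; rewrite Rmult_1_l.
    rewrite /rsum bsum_pair sum_unit /=.
    by rewrite -bsum_mull -/(rsum d) d1 Rmult_1_l.
  - rewrite mutinfo_prod //; [lra| by move=> _; lra| by rewrite /rsum sum_unit].
  - have -> : through (fun (u : unit) x => 1 * d x) K = fun u y => 1 * K x0 y.
      apply: functional_extensionality => u; apply: functional_extensionality => y.
      rewrite /through /rsum (bigD1 x0) //= big1 /d ?eqxx; first ring.
      by move=> x /negbTE ->; ring.
    rewrite mutinfo_prod //; [by move=> _; lra| by rewrite /rsum sum_unit].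
have := psi0 (Rle_refl 0); lra.
Qed.

Lemma psi_mono (x0 : X) x y : 0 <= x -> x <= y -> psi x <= psi y.
Proof.
move=> hx hxy.
case: (Req_dec y 0) => hy.
  have -> : x = y by lra. lra.
set l := x / y.
have hl : 0 <= l <= 1.
  rewrite /l; split; first by apply: Rmult_le_pos => //; left; apply: Rinv_0_lt_compat; lra.
  have e : 1 - x / y = (y - x) / y by field.
  have : 0 <= (y - x) / y by apply: Rmult_le_pos; [lra | left; apply: Rinv_0_lt_compat; lra].
  lra.
have E : x = l * y + (1 - l) * 0 by rewrite /l; field.
have := Hconv (x := y) (y := 0) (Rle_trans _ _ _ hx hxy) (Rle_refl 0) hl.
rewrite -E (psi_at0 x0).
have := psi0 (Rle_trans _ _ _ hx hxy).
nra.
Qed.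

Lemma iter_ge0 t j : 0 <= t -> 0 <= iter j psi t.
Proof. by move=> ht; elim: j => //= j IH; apply: psi0. Qed.
End Psi.

Section Tup.
Variables (X Y W : finType) (K : X -> Y -> R) (m : nat).
Variable f : 'I_m.+1 -> W -> seq Y -> X.
Hypothesis HK : is_channel K.

Definition FF (j : nat) (w : W) (s : seq Y) : X := f (inord j) w s.

Definition cj (j : nat) (w : W) (z : j.-tuple Y) : R :=
  \big[Rmult/R1]_(i < j) K (FF i w (take i z)) (tnth z i).

Definition ee (j : nat) (v : j.-tuple Y * Y) : j.+1.-tuple Y := [tuple of rcons v.1 v.2].

Lemma ee_bij j : bijective (@ee j).
Proof.
apply: inj_card_bij.
  move=> [z1 y1] [z2 y2] /(congr1 val) /= /rcons_inj [] /val_inj -> -> //.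
by rewrite card_prod !card_tuple expnSr.
Qed.

Lemma cj_step j w (z : j.-tuple Y) (y : Y) : cj w (ee (z, y)) = cj w z * K (FF j w z) y.
Proof.
rewrite /cj big_ord_recr /=; congr (_ * _).
- apply: eq_bigr => i _.
  have hi : leq i (size z) by rewrite size_tuple; apply: ltnW.
  rewrite /= -cats1 takel_cat //; congr (K _ _).
  by rewrite (tnth_nth y) (tnth_nth y) /= nth_rcons size_tuple ltn_ord.
- rewrite -cats1 take_size_cat ?size_tuple //; congr (K _ _).
  by rewrite (tnth_nth y) /= nth_rcons size_tuple ltnn eqxx.
Qed.

Lemma cj0 j w z : 0 <= cj (j := j) w z.
Proof.
apply: (big_ind (fun x => 0 <= x)); [lra | move=> *; nra | move=> i _].
by have [h _] := HK (FF i w (take i z)); apply: h.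
Qed.

Lemma cj1 j w : \big[Rplus/R0]_(z : j.-tuple Y) cj w z = 1.
Proof.
elim: j => [|j IH].
  by rewrite sum_tuple0 /cj big_ord0.
rewrite (reindex (@ee j)) /=; last exact: onW_bij (ee_bij j).
rewrite bsum_pair -IH; apply: eq_bigr => z _.
under eq_bigr => y _ do rewrite cj_step.
by rewrite -bsum_mull; have [_ h] := HK (FF j w z); rewrite /rsum in h; rewrite h Rmult_1_r.
Qed.

Lemma cj_relabel (U : finType) (p : U -> W -> R) j :
  mutinfo (through p (@cj j.+1)) = mutinfo (through p (cc' K (@cj j) (fun w z => FF j w z))).
Proof.
apply: (mutinfo_relabel (e := @ee j)); first exact: ee_bij.
move=> u [z y]; rewrite /through /rsum; apply: eq_bigr => w _.
by rewrite cj_step /cc'.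
Qed.
End Tup.

Unset Implicit Arguments.
Theorem corollary5 (X Y W : finType) (K : X -> Y -> R) (psi : R -> R)
  (n : nat) (f : 'I_n -> W -> seq Y -> X) :
  is_channel K ->
  (forall t, 0 <= t -> 0 <= psi t) ->
  convex_on_nonneg psi ->
  (forall t, 0 <= t -> FI_le K t (t - psi t)) ->
  (0 < n)%nat ->
  forall t, 0 <= t ->
    FI_le (feedback_channel (W:=W) K f) t (t - iter n psi t).
Proof.
move=> HK psi0 Hconv HF; case: n f => [|m] f // _ t t0 v [U [p [[Hp0 Hp1] [Hmi ->]]]].
have Hp0' : forall u w, 0 <= p u w by move=> u w; apply: (Hp0 (u, w)).
have Hp1' : \big[Rplus/R0]_(u : U) \big[Rplus/R0]_(w : W) p u w = 1.
  by move: Hp1; rewrite /rsum bsum_pair.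
case: (pickP (@predT W)) => [w0 _ | hW]; last first.
  exfalso; move: Hp1'; rewrite big1; first lra.
  by move=> u _; rewrite big1 // => w; have := hW w.
pose x0 := f ord0 w0 [::].
have -> : feedback_channel K f = @cj X Y W K m f m.+1.
  apply: functional_extensionality => w; apply: functional_extensionality => z.
  rewrite /feedback_channel /cj; apply: eq_bigr => i _; by rewrite /FF inord_val.
suff : forall j, mutinfo (through p (@cj X Y W K m f j)) <= t - iter j psi t by apply.
elim => [|j IH].
  have -> : through p (@cj X Y W K m f 0) = fun u z => rsum (p u) * (fun _ => 1) z.
    apply: functional_extensionality => u; apply: functional_extensionality => z.
    by rewrite /through /rsum bsum_mulr; apply: eq_bigr => w _; rewrite /cj big_ord0.
  rewrite mutinfo_prod /=.
  - lra.
  - by move=> u; apply: bsum_ge0 => *; apply: Hp0'.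
  - by move=> _; lra.
  - by rewrite /rsum -Hp1'.
  - by rewrite /rsum sum_tuple0.
rewrite cj_relabel.
apply: (Rle_trans _ (t - psi (t - mutinfo (through p (@cj X Y W K m f j))))).
  apply: (GS HK psi0 Hconv HF) => //.
  - by move=> *; apply: cj0.
  - by move=> w; apply: cj1.
rewrite iterS.
have hI : iter j psi t <= t - mutinfo (through p (@cj X Y W K m f j)) by lra.
have := psi_mono HK psi0 Hconv HF x0 (iter_ge0 psi0 j t0) hI.
lra.
Qed.
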